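(* Let $A\neq0$ be a constant and consider $$u_{tt}=A\,u_{xxxx}+S'(u_x)\,u_x\,u_{xx}+2S(u_x)\,u_{xx}+Z(u).$$ In each case below, the listed vector fields generate point symmetries of this equation. (i) $S(p)=\beta_0p^{-2}$ with $\beta_0\in\{0,1\}$ and $Z(u)=e^u$: the fields $\partial_t,\ \partial_x,\ 2t\partial_t+x\partial_x-4\partial_u$. (ii) $S(p)=\beta_0p^{-2}$ with $\beta_0\in\{0,1\}$ and $Z(u)=u^{\alpha}$, where $\alpha\neq0,1$: the fields $\partial_t,\ \partial_x,\ 2t\partial_t+x\partial_x-\frac{4u}{\alpha-1}\partial_u$. (iii) $S(p)=p^2$ and $Z\equiv\delta$ with $\delta\neq0$ a constant: the fields $\partial_t,\ \partial_x,\ \partial_u,\ t\partial_u,\ \frac{t}{\delta}\partial_t+\frac{x}{2\delta}\partial_x+t^2\partial_u$. (iv) $S(p)=p^2$ and $Z(u)=e^u$: the fields $\partial_t,\ \partial_x,\ 2t\partial_t+x\partial_x-4\partial_u$.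
   Context: Subscripts denote partial derivatives and a prime denotes the derivative of a function of one variable. *)

(* Defs.v *)
From Stdlib Require Import Reals List.
From Coquelicot Require Import Coquelicot.
Import ListNotations.
Open Scope R_scope.

Definition fn2 := R -> R -> R.

Definition Dt (f : fn2) : fn2 := fun t x => Derive (fun s => f s x) t.
Definition Dx (f : fn2) : fn2 := fun t x => Derive (fun y => f t y) x.

Inductive dir := Tdir | Xdir.
Definition Dd (d : dir) : fn2 -> fn2 := match d with Tdir => Dt | Xdir => Dx end.

Definition Dw (w : list dir) (f : fn2) : fn2 := fold_right Dd f w.

Definition smooth2 (f : fn2) : Prop :=
  forall (w : list dir) (t x : R),
    ex_derive (fun s => Dw w f s x) t /\ ex_derive (fun y => Dw w f t y) x.

(* A vector field  tau(t,x,u) d_t + xi(t,x,u) d_x + eta(t,x,u) d_u. *)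
Record vfield := VF {
  vf_t : R -> R -> R -> R;
  vf_x : R -> R -> R -> R;
  vf_u : R -> R -> R -> R }.

Definition Qchar (V : vfield) (u : fn2) : fn2 := fun t x =>
  vf_u V t x (u t x) - vf_t V t x (u t x) * Dt u t x
  - vf_x V t x (u t x) * Dx u t x.

(* Prolongation coefficient phi^J = D_J Q + tau u_{J t} + xi u_{J x},
   evaluated along u (J given by the word w). *)
Definition prol (V : vfield) (u : fn2) (w : list dir) : fn2 := fun t x =>
  Dw w (Qchar V u) t x + vf_t V t x (u t x) * Dw (Tdir :: w) u t x
  + vf_x V t x (u t x) * Dw (Xdir :: w) u t x.

(* A fourth-order equation Delta(t, x, u, u_x, u_xx, u_xxxx, u_tt) = 0,
   given as a function on (the relevant part of) the jet space. *)
Definition jetfun := R -> R -> R -> R -> R -> R -> R -> R.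

Definition eqF (A : R) (S Z : R -> R) : jetfun :=
  fun t x u p q r s => s - A * r - Derive S p * p * q - 2 * S p * q - Z u.

Definition Delta (F : jetfun) (u : fn2) (t x : R) : R :=
  F t x (u t x) (Dx u t x) (Dx (Dx u) t x) (Dx (Dx (Dx (Dx u))) t x)
    (Dt (Dt u) t x).

(* The fourth prolongation pr^(4) V applied to Delta, at the 4-jet of u at
   (t,x): the derivative of Delta along pr^(4) V. *)
Definition prV (F : jetfun) (V : vfield) (u : fn2) (t x : R) : R :=
  let tau := vf_t V t x (u t x) in
  let xi := vf_x V t x (u t x) in
  let eta := vf_u V t x (u t x) in
  Derive (fun e =>
    F (t + e * tau) (x + e * xi) (u t x + e * eta)
      (Dx u t x + e * prol V u [Xdir] t x)
      (Dx (Dx u) t x + e * prol V u [Xdir; Xdir] t x)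
      (Dx (Dx (Dx (Dx u))) t x + e * prol V u [Xdir; Xdir; Xdir; Xdir] t x)
      (Dt (Dt u) t x + e * prol V u [Tdir; Tdir] t x)) 0.

(* Lie's infinitesimal invariance criterion: pr^(4) V (Delta) = 0 at every
   point of the jet space (within the admissible region adm, a condition on
   the values of u and u_x) where Delta = 0.  Jet points are represented as
   jets of smooth functions u at a point (t,x); every jet arises this way
   (e.g. from a polynomial). *)
Definition is_point_symmetry (F : jetfun) (adm : R -> R -> Prop)
    (V : vfield) : Prop :=
  forall u : fn2, smooth2 u -> forall t x : R,
    adm (u t x) (Dx u t x) -> Delta F u t x = 0 -> prV F V u t x = 0.

Definition d_t : vfield := VF (fun _ _ _ => 1) (fun _ _ _ => 0) (fun _ _ _ => 0).
Definition d_x : vfield := VF (fun _ _ _ => 0) (fun _ _ _ => 1) (fun _ _ _ => 0).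
Definition d_u : vfield := VF (fun _ _ _ => 0) (fun _ _ _ => 0) (fun _ _ _ => 1).
Definition t_d_u : vfield := VF (fun _ _ _ => 0) (fun _ _ _ => 0) (fun t _ _ => t).

(* Main.v *)
Require Import Defs.
From Stdlib Require Import Reals List Lra Lia Classical ClassicalEpsilon FunctionalExtensionality.
From Coquelicot Require Import Coquelicot.
Require Import Defs.
Import ListNotations.
Open Scope R_scope.

Section Baire.
Variable E : nat -> R -> Prop.
Variables a b : R.
Hypothesis hab : a < b.
Hypothesis Eopen : forall n s, ~ E n s -> exists d, 0 < d /\ forall z, Rabs (z - s) < d -> ~ E n z.
Hypothesis Ecov : forall s, a <= s <= b -> exists n, E n s.

Lemma baire : exists n a' b', (a <= a' /\ a' < b' /\ b' <= b) /\ forall s, a' <= s <= b' -> E n s.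
Proof.
  apply NNPP; intro Hn.
  assert (H : forall n a' b', (a <= a' /\ a' < b' /\ b' <= b) -> exists s, a' <= s <= b' /\ ~ E n s).
  { intros n a' b' Hi. apply NNPP; intro Hc. apply Hn. exists n, a', b'. split; auto.
    intros s Hs. apply NNPP; intro Hs'. apply Hc. exists s; auto. }
  assert (Step : forall n (p : R * R), exists q : R * R,
     (a <= fst p /\ fst p < snd p /\ snd p <= b) -> (fst p <= fst q /\ fst q < snd q /\ snd q <= snd p) /\
        forall s, fst q <= s <= snd q -> ~ E n s).
  { intros n [a' b']. simpl.
    destruct (classic ((a <= a' /\ a' < b' /\ b' <= b))) as [Hi|Hi].
    - destruct (H n a' b' Hi) as [s [Hs Hns]].
      destruct (Eopen n s Hns) as [d [Hd Hz]].
      exists (Rmax a' (s - d/2), Rmin b' (s + d/2)). intros _. simpl.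
      split.
      + split; [|split].
        * apply Rmax_l.
        * apply Rmax_lub_lt; apply Rmin_glb_lt; lra.
        * apply Rmin_l.
      + intros z [Hz1 Hz2]. apply Hz.
        assert (s - d/2 <= z) by (eapply Rle_trans; [apply Rmax_r|exact Hz1]).
        assert (z <= s + d/2) by (eapply Rle_trans; [exact Hz2|apply Rmin_r]).
        apply Rabs_def1; lra.
    - exists (a', b'). intros; contradiction. }
  set (st := fun n p => proj1_sig (constructive_indefinite_description _ (Step n p))).
  assert (Hst : forall n p, (a <= fst p /\ fst p < snd p /\ snd p <= b) -> (fst p <= fst (st n p) /\ fst (st n p) < snd (st n p) /\ snd (st n p) <= snd p) /\
        forall s, fst (st n p) <= s <= snd (st n p) -> ~ E n s).
  { intros n p. exact (proj2_sig (constructive_indefinite_description _ (Step n p))). }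
  set (I := fix I n := match n with O => (a, b) | S k => st k (I k) end).
  assert (Hinv : forall n, (a <= fst (I n) /\ fst (I n) < snd (I n) /\ snd (I n) <= b)).
  { induction n; simpl. lra.
    destruct (Hst n (I n) IHn) as [[H1 [H2 H3]] _]. fold (I n) in *. lra. }
  assert (Hmono : forall n k, fst (I n) <= fst (I (k + n)%nat) /\ snd (I (k + n)%nat) <= snd (I n)).
  { intros n k. induction k. simpl. lra.
    replace (S k + n)%nat with (S (k + n)) by lia. simpl.
    destruct (Hst (k+n)%nat _ (Hinv (k+n)%nat)) as [[H1 [H2 H3]] _]. fold (I (k+n)%nat) in *. lra. }
  assert (Hall : forall m n, fst (I m) <= snd (I n)).
  { intros m n. destruct (Nat.le_gt_cases m n) as [Hl|Hl].
    - replace n with ((n - m) + m)%nat by lia. destruct (Hmono m (n-m)%nat). specialize (Hinv ((n-m)+m)%nat). lra.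
    - replace m with ((m - n) + n)%nat by lia. destruct (Hmono n (m-n)%nat). specialize (Hinv ((m-n)+n)%nat). lra. }
  destruct (completeness (fun r => exists n, r = fst (I n))) as [c [Hub Hlub]].
  { exists b. intros r [n ->]. specialize (Hinv n). lra. }
  { exists a. exists O. reflexivity. }
  assert (Hc : forall n, fst (I n) <= c <= snd (I n)).
  { intro n. split. apply Hub. now exists n. apply Hlub. intros r [m ->]. apply Hall. }
  destruct (Ecov c) as [n Hn'].
  { specialize (Hc O). simpl in Hc. lra. }
  destruct (Hst n (I n) (Hinv n)) as [_ Hno].
  apply (Hno c). exact (Hc (S n)). exact Hn'.
Qed.
End Baire.
Lemma cont_eps (f : R -> R) s : ex_derive f s ->
  forall eps, 0 < eps -> exists d, 0 < d /\ forall z, Rabs (z - s) < d -> Rabs (f z - f s) < eps.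
Proof.
  intros H eps He.
  assert (Hc : continuity_pt f s).
  { apply continuity_pt_filterlim. exact (ex_derive_continuous f s H). }
  apply continuity_pt_locally with (eps := mkposreal eps He) in Hc.
  destruct Hc as [d Hd]. exists d. split. apply cond_pos.
  intros z Hz. apply Hd. exact Hz.
Qed.

Lemma Dw_app w1 w2 f : Dw w1 (Dw w2 f) = Dw (w1 ++ w2) f.
Proof. unfold Dw. now rewrite fold_right_app. Qed.

Lemma smooth2_Dw f w : smooth2 f -> smooth2 (Dw w f).
Proof. intros H w' t x. rewrite Dw_app. apply H. Qed.

Lemma ex_cont (g : R -> R) y : ex_derive g y -> continuity_pt g y.
Proof. intro H. apply continuity_pt_filterlim. exact (ex_derive_continuous g y H). Qed.

Lemma mvt_bound (g : R -> R) x0 v M : (forall y, ex_derive g y) ->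
  (forall y, Rabs (y - x0) <= 1 -> Rabs (Derive g y) <= M) -> Rabs (v - x0) <= 1 ->
  Rabs (g v - g x0) <= M * Rabs (v - x0).
Proof.
  intros Hd Hb Hv.
  destruct (MVT_gen g x0 v (Derive g)) as [c [Hc Heq]].
  - intros y _. apply Derive_correct. apply Hd.
  - intros y _. apply ex_cont. apply Hd.
  - rewrite Heq, Rabs_mult. apply Rmult_le_compat_r. apply Rabs_pos.
    apply Hb. destruct Hc as [Hc1 Hc2].
    unfold Rmin, Rmax in *. destruct (Rle_dec x0 v); apply Rabs_le; apply Rabs_le_between in Hv; lra.
Qed.

Lemma cont2d (K : R -> R -> R) s x0 M a' b' :
  (forall u v, ex_derive (fun z => K z v) u) -> (forall u v, ex_derive (fun z => K u z) v) ->
  a' < s < b' ->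
  (forall u y, a' <= u <= b' -> Rabs (y - x0) <= 1 -> Rabs (Derive (fun z => K u z) y) <= M) ->
  continuity_2d_pt K s x0.
Proof.
  intros H1 H2 Hs HM eps.
  destruct (cont_eps (fun z => K z x0) s (H1 s x0) (eps/2)) as [d1 [Hd1 Hz1]].
  { destruct eps; simpl; lra. }
  assert (HMa : 0 <= M).
  { eapply Rle_trans. apply Rabs_pos. apply (HM s x0). lra. rewrite Rminus_diag, Rabs_R0; lra. }
  set (e2 := eps / (2 * (M + 1))).
  assert (He2 : 0 < e2). { unfold e2. destruct eps; simpl. apply Rdiv_lt_0_compat; lra. }
  assert (Hd : 0 < Rmin (Rmin d1 e2) (Rmin (Rmin (s - a') (b' - s)) 1)).
  { repeat apply Rmin_glb_lt; lra. }
  exists (mkposreal _ Hd). simpl. intros u v Hu Hv.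
  assert (Hu1 : Rabs (u - s) < d1) by (eapply Rlt_le_trans; [exact Hu|]; repeat (eapply Rle_trans; [apply Rmin_l|]); lra).
  assert (Hv2 : Rabs (v - x0) < e2) by (eapply Rlt_le_trans; [exact Hv|]; eapply Rle_trans; [apply Rmin_l|apply Rmin_r]).
  assert (Hv1 : Rabs (v - x0) <= 1) by (left; eapply Rlt_le_trans; [exact Hv|]; eapply Rle_trans; [apply Rmin_r|apply Rmin_r]).
  assert (Hu2 : Rabs (u - s) < Rmin (s - a') (b' - s)) by (eapply Rlt_le_trans; [exact Hu|]; eapply Rle_trans; [apply Rmin_r|apply Rmin_l]).
  assert (Hua : a' <= u <= b').
  { apply Rabs_lt_between in Hu2. pose proof (Rmin_l (s - a') (b' - s)). pose proof (Rmin_r (s - a') (b' - s)). lra. }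
  assert (Hb : Rabs (K u v - K u x0) <= M * Rabs (v - x0)).
  { apply (mvt_bound (fun z => K u z)). intro; apply H2. intros y Hy. apply HM; auto. exact Hv1. }
  specialize (Hz1 u Hu1). simpl in Hz1.
  replace (K u v - K s x0) with ((K u v - K u x0) + (K u x0 - K s x0)) by ring.
  eapply Rle_lt_trans. apply Rabs_triang.
  assert (M * Rabs (v - x0) <= M * e2) by (apply Rmult_le_compat_l; lra).
  assert (M * e2 < eps / 2).
  { unfold e2. destruct eps as [ep Hep]; simpl in *.
    apply Rlt_le_trans with ((M + 1) * (ep / (2 * (M + 1)))).
    apply Rmult_lt_compat_r. apply Rdiv_lt_0_compat; lra. lra.
    right. field. lra. }
  lra.
Qed.

Lemma ex_sum_abs_cont (g h : R -> R) s : ex_derive g s -> ex_derive h s ->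
  continuity_pt (fun y => Rabs (g y) + Rabs (h y)) s.
Proof.
  intros Hg Hh. apply continuity_pt_plus.
  - apply (continuity_pt_comp g Rabs). apply ex_cont, Hg. apply Rcontinuity_abs.
  - apply (continuity_pt_comp h Rabs). apply ex_cont, Hh. apply Rcontinuity_abs.
Qed.

Lemma schwarz2 f : smooth2 f -> forall t x, Dt (Dx f) t x = Dx (Dt f) t x.
Proof.
  intros Hf t0 x0.
  set (k' := Dx (Dt (Dx f))). set (m' := Dx (Dx (Dt f))).
  set (G := fun s y => Rabs (k' s y) + Rabs (m' s y)).
  apply NNPP; intro Hne.
  set (d := fun s => Dt (Dx f) s x0 - Dx (Dt f) s x0).
  assert (Hdd : ex_derive d t0).
  { exact (ex_derive_minus (fun s => Dt (Dx f) s x0) (fun s => Dx (Dt f) s x0) t0 (proj1 (Hf [Tdir; Xdir] t0 x0)) (proj1 (Hf [Xdir; Tdir] t0 x0))). }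
  assert (Hd0 : 0 < Rabs (d t0)). { apply Rabs_pos_lt. unfold d. lra. }
  destruct (cont_eps d t0 Hdd _ Hd0) as [de [Hde Hdz]].
  destruct (baire (fun n s => forall y, Rabs (y - x0) <= 1 -> G s y <= INR n) (t0 - de/2) (t0 + de/2)) as [n [a' [b' [[Ha1 [Ha2 Ha3]] HE]]]].
  - lra.
  - intros n s Hns.
    apply not_all_ex_not in Hns. destruct Hns as [y Hy].
    apply imply_to_and in Hy. destruct Hy as [Hy1 Hy2]. apply Rnot_le_lt in Hy2.
    set (al := G s y - INR n).
    destruct (cont_eps (fun z => k' z y) s (proj1 (Hf [Xdir;Tdir;Xdir] s y)) (al/2)) as [d1 [Hd1 Hz1]]. unfold al; lra.
    destruct (cont_eps (fun z => m' z y) s (proj1 (Hf [Xdir;Xdir;Tdir] s y)) (al/2)) as [d2 [Hd2 Hz2]]. unfold al; lra.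
    exists (Rmin d1 d2). split. apply Rmin_glb_lt; lra.
    intros z Hz HE. specialize (HE y Hy1).
    assert (A1 := Hz1 z (Rlt_le_trans _ _ _ Hz (Rmin_l _ _))).
    assert (A2 := Hz2 z (Rlt_le_trans _ _ _ Hz (Rmin_r _ _))).
    simpl in A1, A2.
    pose proof (Rabs_triang_inv (k' s y) (k' z y)).
    pose proof (Rabs_triang_inv (m' s y) (m' z y)).
    rewrite Rabs_minus_sym in A1, A2.
    unfold al in *; unfold G in *. lra.
  - intros s _.
    destruct (continuity_ab_maj (G s) (x0 - 1) (x0 + 1)) as [Mx [HMx _]]. lra.
    { intros c _. apply ex_sum_abs_cont. exact (proj2 (Hf [Xdir;Tdir;Xdir] s c)). exact (proj2 (Hf [Xdir;Xdir;Tdir] s c)). }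
    destruct (INR_archimed 1 (G s Mx)) as [n Hn]. lra.
    exists n. intros y Hy. apply Rabs_le_between in Hy.
    eapply Rle_trans. apply HMx. lra. lra.
  - set (s := (a' + b') / 2).
    assert (Hsd : d s = 0).
    { unfold d. apply Rminus_diag_eq. apply (Schwarz f s x0).
      - exists (mkposreal 1 Rlt_0_1). intros u v _ _. repeat split.
        exact (proj1 (Hf [] u v)). exact (proj2 (Hf [] u v)).
        exact (proj1 (Hf [Xdir] u v)). exact (proj2 (Hf [Tdir] u v)).
      - apply (cont2d (Dt (Dx f)) s x0 (INR n) a' b').
        + intros u v. exact (proj1 (Hf [Tdir;Xdir] u v)).
        + intros u v. exact (proj2 (Hf [Tdir;Xdir] u v)).
        + unfold s; lra.
        + intros u y Hu Hy. specialize (HE u Hu y Hy). unfold G in HE.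
          change (Rabs (k' u y) <= INR n). pose proof (Rabs_pos (m' u y)). lra.
      - apply (cont2d (Dx (Dt f)) s x0 (INR n) a' b').
        + intros u v. exact (proj1 (Hf [Xdir;Tdir] u v)).
        + intros u v. exact (proj2 (Hf [Xdir;Tdir] u v)).
        + unfold s; lra.
        + intros u y Hu Hy. specialize (HE u Hu y Hy). unfold G in HE.
          change (Rabs (m' u y) <= INR n). pose proof (Rabs_pos (k' u y)). lra. }
    assert (Rabs (s - t0) < de). { unfold s. apply Rabs_def1; lra. }
    specialize (Hdz s H). rewrite Hsd in Hdz. rewrite Rminus_0_l, Rabs_Ropp in Hdz. lra.
Qed.
Lemma commf f : smooth2 f -> Dt (Dx f) = Dx (Dt f).
Proof. intro H. apply functional_extensionality; intro t; apply functional_extensionality; intro x. now apply schwarz2. Qed.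

Lemma comm_rep u k : smooth2 u -> Dw (repeat Xdir k) (Dt u) = Dt (Dw (repeat Xdir k) u).
Proof.
  intro Hu. induction k. reflexivity.
  change (Dx (Dw (repeat Xdir k) (Dt u)) = Dt (Dx (Dw (repeat Xdir k) u))).
  rewrite IHk. symmetry. apply commf. now apply smooth2_Dw.
Qed.

Ltac ex_solve :=
  repeat split;
  match goal with
  | Hu : smooth2 ?u |- ex_derive (fun y => ?F ?t y) ?x => exact (proj2 (Hu _ t x))
  | Hu : smooth2 ?u |- ex_derive (fun y => ?F y ?x) ?t => exact (proj1 (Hu _ t x))
  end.

Section Prol.
Variables (u : fn2) (Hu : smooth2 u) (a b c d e0 e1 e2 e3 : R).

Definition Qk (k : nat) : fn2 := fun t x =>
  (e1 - INR k * c) * Dw (repeat Xdir k) u t x - (a*t+b) * Dw (repeat Xdir k) (Dt u) t x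
  - (c*x+d) * Dw (repeat Xdir (S k)) u t x.

Definition Q' : fn2 := fun t x =>
  e0 + e1 * u t x + e2 * t + e3 * t^2 - (a*t+b) * Dt u t x - (c*x+d) * Dx u t x.

Lemma HuT : smooth2 (Dt u).
Proof. exact (smooth2_Dw u [Tdir] Hu). Qed.

Lemma DxQk k : Dx (Qk k) = Qk (S k).
Proof.
  pose proof HuT as Hg.
  apply functional_extensionality; intro t; apply functional_extensionality; intro x.
  unfold Dx at 1, Qk. apply is_derive_unique. auto_derive.
  - repeat split. exact (proj2 (Hu _ t x)). exact (proj2 (Hg _ t x)). exact (proj2 (Hu (repeat Xdir (S k)) t x)).
  - rewrite S_INR. unfold Dw. cbn [fold_right repeat Dd]. unfold Dx. ring.
Qed.

Lemma DxQ' : Dx Q' = Qk 1.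
Proof.
  pose proof HuT as Hg.
  apply functional_extensionality; intro t; apply functional_extensionality; intro x.
  unfold Dx at 1, Q', Qk. apply is_derive_unique. auto_derive.
  - repeat split. exact (proj2 (Hu [] t x)). exact (proj2 (Hg [] t x)). exact (proj2 (Hu [Xdir] t x)).
  - simpl. unfold Dx. ring.
Qed.

Lemma prolX (V : vfield) k :
  (forall t x w, vf_t V t x w = a*t+b /\ vf_x V t x w = c*x+d /\ vf_u V t x w = e0 + e1*w + e2*t + e3*t^2) ->
  forall t x, prol V u (repeat Xdir (S k)) t x = (e1 - INR (S k) * c) * Dw (repeat Xdir (S k)) u t x.
Proof.
  intros HV t x.
  assert (HQ : Qchar V u = Q').
  { apply functional_extensionality; intro t'; apply functional_extensionality; intro x'.
    unfold Qchar, Q'. destruct (HV t' x' (u t' x')) as [-> [-> ->]]. ring. }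
  assert (Hk : forall k, Dw (repeat Xdir (S k)) Q' = Qk (S k)).
  { induction k0. simpl. apply DxQ'. change (Dx (Dw (repeat Xdir (S k0)) Q') = Qk (S (S k0))).
    rewrite IHk0. apply DxQk. }
  unfold prol. rewrite HQ, Hk. destruct (HV t x (u t x)) as [-> [-> _]].
  unfold Qk. rewrite comm_rep by exact Hu.
  change (Dw (Tdir :: repeat Xdir (S k)) u t x) with (Dt (Dw (repeat Xdir (S k)) u) t x).
  change (Dw (Xdir :: repeat Xdir (S k)) u t x) with (Dw (repeat Xdir (S (S k))) u t x).
  ring.
Qed.

Lemma prolTT (V : vfield) :
  (forall t x w, vf_t V t x w = a*t+b /\ vf_x V t x w = c*x+d /\ vf_u V t x w = e0 + e1*w + e2*t + e3*t^2) ->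
  forall t x, prol V u [Tdir; Tdir] t x = (e1 - 2 * a) * Dt (Dt u) t x + 2 * e3.
Proof.
  intros HV t x.
  assert (HQ : Qchar V u = Q').
  { apply functional_extensionality; intro t'; apply functional_extensionality; intro x'.
    unfold Qchar, Q'. destruct (HV t' x' (u t' x')) as [-> [-> ->]]. ring. }
  pose proof HuT as Hg.
  assert (H1 : Dt Q' = fun t x => e1 * Dt u t x + e2 + 2 * e3 * t - a * Dt u t x - (a*t+b) * Dt (Dt u) t x - (c*x+d) * Dt (Dx u) t x).
  { apply functional_extensionality; intro t'; apply functional_extensionality; intro x'.
    unfold Dt at 1, Q'. apply is_derive_unique. auto_derive.
    - repeat split. exact (proj1 (Hu [] t' x')). exact (proj1 (Hu [Tdir] t' x')). exact (proj1 (Hu [Xdir] t' x')).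
    - unfold Dt. simpl. ring. }
  assert (H2 : Dt (fun t x => e1 * Dt u t x + e2 + 2 * e3 * t - a * Dt u t x - (a*t+b) * Dt (Dt u) t x - (c*x+d) * Dt (Dx u) t x)
     = fun t x => e1 * Dt (Dt u) t x + 2 * e3 - 2 * a * Dt (Dt u) t x - (a*t+b) * Dt (Dt (Dt u)) t x - (c*x+d) * Dt (Dt (Dx u)) t x).
  { apply functional_extensionality; intro t'; apply functional_extensionality; intro x'.
    unfold Dt at 1. apply is_derive_unique. auto_derive.
    - repeat split. exact (proj1 (Hu [Tdir] t' x')). exact (proj1 (Hu [Tdir] t' x')). exact (proj1 (Hu [Tdir;Tdir] t' x')). exact (proj1 (Hu [Tdir;Xdir] t' x')).
    - unfold Dt. simpl. ring. }
  unfold prol. rewrite HQ. simpl. rewrite H1, H2.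
  destruct (HV t x (u t x)) as [-> [-> _]].
  rewrite (commf u Hu). rewrite (commf (Dt u) Hg). ring.
Qed.
End Prol.
Lemma prV_eqF A S Z V u t x :
  ex_derive S (Dx u t x) -> ex_derive (Derive S) (Dx u t x) -> ex_derive Z (u t x) ->
  prV (eqF A S Z) V u t x =
   prol V u [Tdir;Tdir] t x - A * prol V u [Xdir;Xdir;Xdir;Xdir] t x
   - (Derive (Derive S) (Dx u t x) * prol V u [Xdir] t x * Dx u t x * Dx (Dx u) t x
      + Derive S (Dx u t x) * prol V u [Xdir] t x * Dx (Dx u) t x
      + Derive S (Dx u t x) * Dx u t x * prol V u [Xdir;Xdir] t x)
   - 2 * (Derive S (Dx u t x) * prol V u [Xdir] t x * Dx (Dx u) t x + S (Dx u t x) * prol V u [Xdir;Xdir] t x)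
   - Derive Z (u t x) * vf_u V t x (u t x).
Proof.
  intros H1 H2 H3. unfold prV, eqF. apply is_derive_unique.
  auto_derive.
  - rewrite !Rmult_0_l, !Rplus_0_r. auto.
  - rewrite !Rmult_0_l, !Rplus_0_r. change (Derive (fun x0 : R => S x0)) with (Derive S); change (Derive (fun x0 : R => Z x0)) with (Derive Z); change (Derive (fun x0 : R => Derive S x0)) with (Derive (Derive S)). ring.
Qed.

Lemma sym_from (A : R) (S Z : R -> R) (adm : R -> R -> Prop) (V : vfield) (a b c d e0 e1 e2 e3 : R) (s1 s2 z1 : R -> R) :
  (forall t x w : R, vf_t V t x w = a*t+b /\ vf_x V t x w = c*x+d /\ vf_u V t x w = e0 + e1*w + e2*t + e3*t^2) ->
  (forall w p : R, adm w p -> ex_derive S p /\ ex_derive (Derive S) p /\ Derive S p = s1 p /\ Derive (Derive S) p = s2 p) ->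
  (forall w p : R, adm w p -> ex_derive Z w /\ Derive Z w = z1 w) ->
  (forall t x w p : R, adm w p -> forall u4 q : R,
     (e1 - 2 * a) * (A * u4 + s1 p * p * q + 2 * S p * q + Z w) + 2 * e3 - A * ((e1 - 4 * c) * u4)
     - (s2 p * ((e1 - c) * p) * p * q + s1 p * ((e1 - c) * p) * q + s1 p * p * ((e1 - 2 * c) * q))
     - 2 * (s1 p * ((e1 - c) * p) * q + S p * ((e1 - 2 * c) * q))
     - z1 w * (e0 + e1 * w + e2 * t + e3 * t ^ 2) = 0) ->
  is_point_symmetry (eqF A S Z) adm V.
Proof.
  intros HV HS HZ Halg u Hu t x Hadm HD.
  destruct (HS _ _ Hadm) as [S1 [S2 [S3 S4]]].
  destruct (HZ _ _ Hadm) as [Z1 Z2].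
  rewrite prV_eqF by assumption.
  rewrite (prolTT u Hu a b c d e0 e1 e2 e3 V HV).
  pose proof (prolX u Hu a b c d e0 e1 e2 e3 V 0 HV t x) as P1.
  pose proof (prolX u Hu a b c d e0 e1 e2 e3 V 1 HV t x) as P2.
  pose proof (prolX u Hu a b c d e0 e1 e2 e3 V 3 HV t x) as P4.
  change (repeat Xdir 1) with [Xdir] in P1.
  change (repeat Xdir 2) with [Xdir;Xdir] in P2.
  change (repeat Xdir 4) with [Xdir;Xdir;Xdir;Xdir] in P4.
  change (Dw [Xdir] u t x) with (Dx u t x) in P1.
  change (Dw [Xdir;Xdir] u t x) with (Dx (Dx u) t x) in P2.
  change (Dw [Xdir;Xdir;Xdir;Xdir] u t x) with (Dx (Dx (Dx (Dx u))) t x) in P4.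
  replace (INR 1) with 1 in P1 by (simpl; ring).
  replace (INR 2) with 2 in P2 by (simpl; ring).
  replace (INR 4) with 4 in P4 by (simpl; ring).
  rewrite P1, P2, P4, S3, S4, Z2.
  destruct (HV t x (u t x)) as [_ [_ ->]].
  unfold Delta, eqF in HD. rewrite S3 in HD.
  assert (Hutt : Dt (Dt u) t x = A * Dx (Dx (Dx (Dx u))) t x + s1 (Dx u t x) * Dx u t x * Dx (Dx u) t x
     + 2 * S (Dx u t x) * Dx (Dx u) t x + Z (u t x)).
  { apply Rminus_diag_uniq. rewrite <- HD. ring. }
  pose proof (Halg t x (u t x) (Dx u t x) Hadm (Dx (Dx (Dx (Dx u))) t x) (Dx (Dx u) t x)) as HH.
  rewrite Hutt, <- HH. ring.
Qed.

Ltac nz := repeat (apply Rmult_integral_contrapositive_currified); auto; try lra.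

Lemma Sinv_facts p : p <> 0 ->
  ex_derive (fun p => 1/p^2) p /\ ex_derive (Derive (fun p => 1/p^2)) p /\
  Derive (fun p => 1/p^2) p = -2/p^3 /\ Derive (Derive (fun p => 1/p^2)) p = 6/p^4.
Proof.
  intro Hp.
  assert (D1 : forall y, y <> 0 -> is_derive (fun p => 1/p^2) y (-2/y^3)).
  { intros y Hy. auto_derive. nz. field. exact Hy. }
  assert (D2 : is_derive (Derive (fun p => 1/p^2)) p (6/p^4)).
  { apply is_derive_ext_loc with (f := fun y => -2/y^3).
    - exists (mkposreal (Rabs p) (Rabs_pos_lt p Hp)). intros y Hy.
      unfold ball in Hy; simpl in Hy; unfold AbsRing_ball, abs, minus, plus, opp in Hy; simpl in Hy.
      assert (Hy0 : y <> 0). { intro E. subst y. rewrite Rplus_0_l, Rabs_Ropp in Hy. lra. }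
      symmetry. apply is_derive_unique. apply D1. exact Hy0.
    - auto_derive. nz. field. exact Hp. }
  repeat split.
  - eexists. apply D1. exact Hp.
  - eexists. exact D2.
  - apply is_derive_unique. apply D1. exact Hp.
  - apply is_derive_unique. exact D2.
Qed.

Lemma S0_facts p :
  ex_derive (fun _ : R => 0) p /\ ex_derive (Derive (fun _ : R => 0)) p /\
  Derive (fun _ : R => 0) p = 0 /\ Derive (Derive (fun _ : R => 0)) p = 0.
Proof.
  assert (E : Derive (fun _ : R => 0) = fun _ => 0).
  { apply functional_extensionality; intro y. apply Derive_const. }
  rewrite E. repeat split; try apply ex_derive_const; apply Derive_const.
Qed.

Lemma Ssq_facts p :
  ex_derive (fun p => p^2) p /\ ex_derive (Derive (fun p => p^2)) p /\
  Derive (fun p => p^2) p = 2 * p /\ Derive (Derive (fun p => p^2)) p = 2.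
Proof.
  assert (E : Derive (fun p => p^2) = fun y => 2 * y).
  { apply functional_extensionality; intro y. apply is_derive_unique. auto_derive. auto. ring. }
  rewrite E. repeat split.
  - auto_derive. auto.
  - auto_derive. auto.
  - apply is_derive_unique. auto_derive. auto. ring.
Qed.

Lemma Zexp_facts w : ex_derive (fun u => exp u) w /\ Derive (fun u => exp u) w = exp w.
Proof. split. auto_derive. auto. apply is_derive_unique. auto_derive; auto; ring. Qed.

Lemma Zconst_facts (dl : R) w : ex_derive (fun _ : R => dl) w /\ Derive (fun _ : R => dl) w = 0.
Proof. split. apply ex_derive_const. apply Derive_const. Qed.

Lemma Zpow_facts al w : 0 < w ->
  ex_derive (fun u => Rpower u al) w /\ Derive (fun u => Rpower u al) w = al * Rpower w al / w.
Proof.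
  intro Hw.
  assert (D : is_derive (fun u => Rpower u al) w (al * Rpower w (al - 1))).
  { apply is_derive_Reals. apply derivable_pt_lim_power. exact Hw. }
  split. eexists; exact D.
  assert (Heq : Derive (fun u : R => Rpower u al) w = al * Rpower w (al-1)) by (apply is_derive_unique; exact D). rewrite Heq.
  unfold Rminus. rewrite Rpower_plus. rewrite Rpower_Ropp, Rpower_1 by exact Hw.
  field. lra.
Qed.

Ltac hv := intros; simpl; repeat split; ring.

Theorem mainTheorem8 (A : R) (hA : A <> 0) :
  (* (i) S(p) = beta0 p^-2, Z(u) = e^u *)
  (forall beta0 : R, (beta0 = 0 \/ beta0 = 1) ->
     let F := eqF A (fun p => beta0 / p ^ 2) (fun u => exp u) in
     let adm := fun (u p : R) => beta0 = 1 -> p <> 0 in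
     is_point_symmetry F adm d_t /\ is_point_symmetry F adm d_x /\
     is_point_symmetry F adm
       (VF (fun t _ _ => 2 * t) (fun _ x _ => x) (fun _ _ _ => -4))) /\
  (* (ii) S(p) = beta0 p^-2, Z(u) = u^alpha, alpha <> 0, 1 *)
  (forall beta0 alpha : R, (beta0 = 0 \/ beta0 = 1) -> alpha <> 0 -> alpha <> 1 ->
     let F := eqF A (fun p => beta0 / p ^ 2) (fun u => Rpower u alpha) in
     let adm := fun (u p : R) => 0 < u /\ (beta0 = 1 -> p <> 0) in
     is_point_symmetry F adm d_t /\ is_point_symmetry F adm d_x /\
     is_point_symmetry F adm
       (VF (fun t _ _ => 2 * t) (fun _ x _ => x)
           (fun _ _ u => - (4 * u / (alpha - 1))))) /\
  (* (iii) S(p) = p^2, Z = delta <> 0 constant *)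
  (forall delta : R, delta <> 0 ->
     let F := eqF A (fun p => p ^ 2) (fun _ => delta) in
     let adm := fun (_ _ : R) => True in
     is_point_symmetry F adm d_t /\ is_point_symmetry F adm d_x /\
     is_point_symmetry F adm d_u /\ is_point_symmetry F adm t_d_u /\
     is_point_symmetry F adm
       (VF (fun t _ _ => t / delta) (fun _ x _ => x / (2 * delta))
           (fun t _ _ => t ^ 2))) /\
  (* (iv) S(p) = p^2, Z(u) = e^u *)
  (let F := eqF A (fun p => p ^ 2) (fun u => exp u) in
   let adm := fun (_ _ : R) => True in
   is_point_symmetry F adm d_t /\ is_point_symmetry F adm d_x /\
   is_point_symmetry F adm
     (VF (fun t _ _ => 2 * t) (fun _ x _ => x) (fun _ _ _ => -4))).
Proof.
  assert (E0 : (fun p : R => 0 / p ^ 2) = (fun _ => 0)).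
  { apply functional_extensionality; intro; unfold Rdiv; ring. }
  split; [|split; [|split]].
  -
    intros beta0 Hb. destruct Hb as [-> | ->]; cbv zeta; [rewrite E0|].
    + split; [|split].
      * apply (sym_from A _ _ _ _ 0 1 0 0 0 0 0 0 (fun _ => 0) (fun _ => 0) (fun w => exp w)); [hv| intros; apply S0_facts | intros; apply Zexp_facts | ].
        intros; cbv beta; ring.
      * apply (sym_from A _ _ _ _ 0 0 0 1 0 0 0 0 (fun _ => 0) (fun _ => 0) (fun w => exp w)); [hv| intros; apply S0_facts | intros; apply Zexp_facts | ].
        intros; cbv beta; ring.
      * apply (sym_from A _ _ _ _ 2 0 1 0 (-4) 0 0 0 (fun _ => 0) (fun _ => 0) (fun w => exp w)); [hv| intros; apply S0_facts | intros; apply Zexp_facts | ].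
        intros; cbv beta; ring.
    + assert (HS : forall w p : R, (fun u p => 1 = 1 -> p <> 0) w p -> _) by
        (intros w p Hp; apply Sinv_facts; apply Hp; reflexivity).
      split; [|split].
      * apply (sym_from A _ _ _ _ 0 1 0 0 0 0 0 0 (fun p => -2/p^3) (fun p => 6/p^4) (fun w => exp w)); [hv| exact HS | intros; apply Zexp_facts | ].
        intros t x w p Hp u4 q; cbv beta in *; field; apply Hp; reflexivity.
      * apply (sym_from A _ _ _ _ 0 0 0 1 0 0 0 0 (fun p => -2/p^3) (fun p => 6/p^4) (fun w => exp w)); [hv| exact HS | intros; apply Zexp_facts | ].
        intros t x w p Hp u4 q; cbv beta in *; field; apply Hp; reflexivity.
      * apply (sym_from A _ _ _ _ 2 0 1 0 (-4) 0 0 0 (fun p => -2/p^3) (fun p => 6/p^4) (fun w => exp w)); [hv| exact HS | intros; apply Zexp_facts | ].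
        intros t x w p Hp u4 q; cbv beta in *; field; apply Hp; reflexivity.
  -
    intros beta0 al Hb Ha0 Ha1.
    assert (HZ : forall w p : R, (fun u p => 0 < u /\ (beta0 = 1 -> p <> 0)) w p -> _) by
        (intros w p [Hw _]; apply (Zpow_facts al w Hw)).
    destruct Hb as [-> | ->]; cbv zeta; [rewrite E0|].
    + split; [|split].
      * apply (sym_from A _ _ _ _ 0 1 0 0 0 0 0 0 (fun _ => 0) (fun _ => 0) (fun w => al * Rpower w al / w)); [hv| intros; apply S0_facts | exact HZ | ].
        intros t x w p [Hw _] u4 q; cbv beta; field; lra.
      * apply (sym_from A _ _ _ _ 0 0 0 1 0 0 0 0 (fun _ => 0) (fun _ => 0) (fun w => al * Rpower w al / w)); [hv| intros; apply S0_facts | exact HZ | ].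
        intros t x w p [Hw _] u4 q; cbv beta; field; lra.
      * apply (sym_from A _ _ _ _ 2 0 1 0 0 (-4/(al-1)) 0 0 (fun _ => 0) (fun _ => 0) (fun w => al * Rpower w al / w)); [intros; simpl; repeat split; try ring; field; lra| intros; apply S0_facts | exact HZ | ].
        intros t x w p [Hw _] u4 q; cbv beta; field; split; lra.
    + assert (HS : forall w p : R, (fun u p => 0 < u /\ (1 = 1 -> p <> 0)) w p -> _) by
        (intros w p [_ Hp]; apply Sinv_facts; apply Hp; reflexivity).
      split; [|split].
      * apply (sym_from A _ _ _ _ 0 1 0 0 0 0 0 0 (fun p => -2/p^3) (fun p => 6/p^4) (fun w => al * Rpower w al / w)); [hv| exact HS | exact HZ | ].
        intros t x w p [Hw Hp] u4 q; cbv beta in *; specialize (Hp eq_refl); field; split; lra.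
      * apply (sym_from A _ _ _ _ 0 0 0 1 0 0 0 0 (fun p => -2/p^3) (fun p => 6/p^4) (fun w => al * Rpower w al / w)); [hv| exact HS | exact HZ | ].
        intros t x w p [Hw Hp] u4 q; cbv beta in *; specialize (Hp eq_refl); field; split; lra.
      * apply (sym_from A _ _ _ _ 2 0 1 0 0 (-4/(al-1)) 0 0 (fun p => -2/p^3) (fun p => 6/p^4) (fun w => al * Rpower w al / w)); [intros; simpl; repeat split; try ring; field; lra| exact HS | exact HZ | ].
        intros t x w p [Hw Hp] u4 q; cbv beta in *; specialize (Hp eq_refl); field; repeat split; lra.
  -
    intros dl Hdl. cbv zeta.
    repeat split.
    + apply (sym_from A _ _ _ _ 0 1 0 0 0 0 0 0 (fun p => 2 * p) (fun _ => 2) (fun _ => 0)); [hv| intros; apply Ssq_facts | intros; apply Zconst_facts | ].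
      intros; cbv beta; ring.
    + apply (sym_from A _ _ _ _ 0 0 0 1 0 0 0 0 (fun p => 2 * p) (fun _ => 2) (fun _ => 0)); [hv| intros; apply Ssq_facts | intros; apply Zconst_facts | ].
      intros; cbv beta; ring.
    + apply (sym_from A _ _ _ _ 0 0 0 0 1 0 0 0 (fun p => 2 * p) (fun _ => 2) (fun _ => 0)); [hv| intros; apply Ssq_facts | intros; apply Zconst_facts | ].
      intros; cbv beta; ring.
    + apply (sym_from A _ _ _ _ 0 0 0 0 0 0 1 0 (fun p => 2 * p) (fun _ => 2) (fun _ => 0)); [hv| intros; apply Ssq_facts | intros; apply Zconst_facts | ].
      intros; cbv beta; ring.
    + apply (sym_from A _ _ _ _ (1/dl) 0 (1/(2*dl)) 0 0 0 0 1 (fun p => 2 * p) (fun _ => 2) (fun _ => 0)); [intros; simpl; repeat split; field; auto| intros; apply Ssq_facts | intros; apply Zconst_facts | ].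
      intros; cbv beta; field; auto.
  -
    cbv zeta. split; [|split].
    + apply (sym_from A _ _ _ _ 0 1 0 0 0 0 0 0 (fun p => 2 * p) (fun _ => 2) (fun w => exp w)); [hv| intros; apply Ssq_facts | intros; apply Zexp_facts | ].
      intros; cbv beta; ring.
    + apply (sym_from A _ _ _ _ 0 0 0 1 0 0 0 0 (fun p => 2 * p) (fun _ => 2) (fun w => exp w)); [hv| intros; apply Ssq_facts | intros; apply Zexp_facts | ].
      intros; cbv beta; ring.
    + apply (sym_from A _ _ _ _ 2 0 1 0 (-4) 0 0 0 (fun p => 2 * p) (fun _ => 2) (fun w => exp w)); [hv| intros; apply Ssq_facts | intros; apply Zexp_facts | ].
      intros; cbv beta; ring.
Qed.
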